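(* Let $n\ge 1$ and let $\rho_1$ be a density matrix on $n$ qubits (Hilbert space $H_1\cong(\mathbb{C}^2)^{\otimes n}$) at time $t_1$. Let $\mathcal{M}_{2|1}$ be a completely positive trace-preserving (CPTP) map from operators on $H_1$ to operators on $H_2\cong(\mathbb{C}^2)^{\otimes n}$, applied between times $t_1$ and $t_2$, with Choi–Jamiołkowski matrix $$M_{12}:=\sum_{i,j=0}^{2^n-1}\big(|i\rangle\langle j|\big)^T\otimes \mathcal{M}_{2|1}\big(|i\rangle\langle j|\big)\in\mathcal{B}(H_1\otimes H_2).$$ Let $R_{12}$ be the two-time $n$-qubit pseudo-density matrix obtained with coarse-grained measurements at $t_1$ and $t_2$ (as defined in the context). Then $$R_{12}=\tfrac12\big(M_{12}\,\rho+\rho\,M_{12}\big),\qquad \rho:=\rho_1\otimes \mathbb{1}_2 .$$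
   Context: Pauli matrices: $\sigma_0=\mathbb{1},\sigma_1,\sigma_2,\sigma_3$; an $n$-qubit Pauli matrix is an element $\tilde\sigma\in\{\sigma_0,\sigma_1,\sigma_2,\sigma_3\}^{\otimes n}$, indexed by $i\in\{0,\dots,4^n-1\}$. Coarse-grained measurement of $\tilde\sigma_{i}$ at time $t_\alpha$: the two-outcome projective measurement $\{P^\alpha_+=(\mathbb{1}+\tilde\sigma_{i})/2,\ P^\alpha_-=(\mathbb{1}-\tilde\sigma_{i})/2\}$ with outcomes $+1,-1$ respectively, and post-measurement (Lüders) update $\rho\mapsto P^\alpha_\pm\rho P^\alpha_\pm$ (unnormalized, its trace being the outcome probability). For a pair $(i_1,i_2)$, the experiment is: prepare $\rho_1$, perform the coarse-grained measurement of $\tilde\sigma_{i_1}$ at $t_1$, apply $\mathcal{M}_{2|1}$ to the post-measurement state, perform the coarse-grained measurement of $\tilde\sigma_{i_2}$ at $t_2$; $\langle\tilde\sigma_{i_1},\tilde\sigma_{i_2}\rangle$ denotes the expectation value of the product of the two $\pm1$ outcomes. The pseudo-density matrix is $$R_{12}=\frac{1}{2^{2n}}\sum_{i_1,i_2=0}^{4^n-1}\langle\tilde\sigma_{i_1},\tilde\sigma_{i_2}\rangle\,\tilde\sigma_{i_1}\otimes\tilde\sigma_{i_2}.$$ *)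

(* Defs.v *)
(* the complex field is an arbitrary numClosedFieldType C
   (e.g. algC, or complex R for a real closed / real field R). *)
From HB Require Import structures.
From mathcomp Require Import all_boot all_order all_algebra.
From mathcomp Require Export mxtens.
Set Implicit Arguments. Unset Strict Implicit. Unset Printing Implicit Defensive.
Import Order.TTheory GRing.Theory Num.Theory.
Local Open Scope ring_scope.

Section QDefs.
Variable C : numClosedFieldType.

Definition adjmx {m n} (A : 'M[C]_(m, n)) : 'M[C]_(n, m) := map_mx Num.conj A^T.

(* positive semidefinite: <v, A v> >= 0 for all v (over C this forces A hermitian) *)
Definition psd {d} (A : 'M[C]_d) : Prop :=
  forall v : 'cV[C]_d, 0 <= (adjmx v *m A *m v) 0 0.

Definition density {d} (rho : 'M[C]_d) : Prop := psd rho /\ \tr rho = 1.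

Definition blockmx {m d} (X : 'M[C]_(m * d)) (p q : 'I_m) : 'M[C]_d :=
  \matrix_(i, j) X (mxtens_index (p, i)) (mxtens_index (q, j)).

(* (id_m (x) Phi)(X) *)
Definition ampl {d e} m (Phi : 'M[C]_d -> 'M[C]_e) (X : 'M[C]_(m * d))
  : 'M[C]_(m * e) :=
  \matrix_(a, b) Phi (blockmx X (mxtens_unindex a).1 (mxtens_unindex b).1)
                     (mxtens_unindex a).2 (mxtens_unindex b).2.

Definition completely_positive {d e} (Phi : 'M[C]_d -> 'M[C]_e) : Prop :=
  forall m (X : 'M[C]_(m * d)), psd X -> psd (ampl Phi X).

Definition trace_preserving {d e} (Phi : 'M[C]_d -> 'M[C]_e) : Prop :=
  forall X, \tr (Phi X) = \tr X.

Definition CPTP {d e} (Phi : {linear 'M[C]_d -> 'M[C]_e}) : Prop :=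
  completely_positive Phi /\ trace_preserving Phi.

Definition sigma (k : 'I_4) : 'M[C]_2 :=
  \matrix_(a, b)
    match val k with
    | 0 => if a == b then 1 else 0
    | 1 => if a == b then 0 else 1
    | 2 => if a == b then 0 else (if val a == 0%N then - 'i else 'i)
    | _ => if a == b then (if val a == 0%N then 1 else -1) else 0
    end.

(* n-qubit Pauli matrices, indexed by i : 'I_(4^n); the index decomposes
   (via mxtens_unindex) into the single-qubit indices, first qubit first *)
Fixpoint pauli (n : nat) : 'I_(4 ^ n) -> 'M[C]_(2 ^ n) :=
  match n return 'I_(4 ^ n) -> 'M[C]_(2 ^ n) with
  | 0 => fun _ => 1%:M
  | n'.+1 => fun i =>
      let ij := @mxtens_unindex 4 (4 ^ n') (cast_ord (expnS 4 n') i) in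
      castmx (esym (expnS 2 n'), esym (expnS 2 n')) (sigma ij.1 *t @pauli n' ij.2)
  end.
Arguments pauli n i : clear implicits.

Definition sgnb (b : bool) : C := if b then 1 else -1.

(* projector onto the outcome sgnb b of the coarse-grained measurement of P *)
Definition proj {d} (P : 'M[C]_d) (b : bool) : 'M[C]_d :=
  2^-1 *: (1%:M + sgnb b *: P).

(* <sigma_{i1}, sigma_{i2}>: expectation of the product of the two outcomes;
   Prob(a,b) = Tr(P2_b Phi(P1_a rho1 P1_a) P2_b) (Lueders updates) *)
Definition corr n (rho1 : 'M[C]_(2 ^ n))
  (Phi : 'M[C]_(2 ^ n) -> 'M[C]_(2 ^ n)) (i1 i2 : 'I_(4 ^ n)) : C :=
  \sum_(a : bool) \sum_(b : bool)
    sgnb a * sgnb b *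
    \tr (proj (pauli n i2) b *m
         Phi (proj (pauli n i1) a *m rho1 *m proj (pauli n i1) a) *m
         proj (pauli n i2) b).

Definition pdm n (rho1 : 'M[C]_(2 ^ n)) (Phi : 'M[C]_(2 ^ n) -> 'M[C]_(2 ^ n))
  : 'M[C]_(2 ^ n * 2 ^ n) :=
  ((2 ^ (2 * n))%:R)^-1 *:
    \sum_(i1 < 4 ^ n) \sum_(i2 < 4 ^ n)
      corr rho1 Phi i1 i2 *: (pauli n i1 *t pauli n i2).

Definition choi {d} (Phi : 'M[C]_d -> 'M[C]_d) : 'M[C]_(d * d) :=
  \sum_(i < d) \sum_(j < d) ((delta_mx i j)^T *t Phi (delta_mx i j)).

End QDefs.

(* Main.v *)
Require Import Defs.
From mathcomp Require Import all_boot all_order all_algebra.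
From mathcomp Require Import mxtens ring.
Import GRing.Theory Num.Theory.
Local Open Scope ring_scope.

Section H.
Variable C : numClosedFieldType.

Lemma sum_delta {d} (F : 'I_d -> C) j : \sum_i F i * (i == j)%:R = F j.
Proof.
rewrite (bigD1 j) //= eqxx mulr1 big1 ?addr0 // => i /negbTE ->.
by rewrite mulr0.
Qed.

Lemma sigmaK (a b c e : 'I_2) :
  \sum_(k < 4) sigma C k a b * sigma C k c e = 2 * ((a == e)%:R * (b == c)%:R).
Proof.
rewrite !big_ord_recr big_ord0 /= !mxE /=.
case: a => [[|[|//]] ?]; case: b => [[|[|//]] ?];
case: c => [[|[|//]] ?]; case: e => [[|[|//]] ?] /=;
rewrite ?mulr0 ?mul0r ?mulr1 ?mul1r ?add0r ?addr0 ?mulrN ?mulNr ?opprK -?expr2 ?sqrCi;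
 idtac.
all: try done.
all: by rewrite ?mulr0 ?subrr ?opprK ?expr1n.
Qed.

Lemma cast_ord_irr m m' (e1 e2 : m = m') (i : 'I_m) : cast_ord e1 i = cast_ord e2 i.
Proof. exact: val_inj. Qed.

Lemma pauliK n (a b c e : 'I_(2 ^ n)) :
  \sum_(k < 4 ^ n) @pauli C n k a b * @pauli C n k c e
  = (2 ^ n)%:R * ((a == e)%:R * (b == c)%:R).
Proof.
elim: n a b c e => [|n IH] a b c e.
  rewrite /= big_ord_recl big_ord0 addr0 !mxE.
  have E : forall x y : 'I_(2 ^ 0), x = y.
    by move=> [[|//] ?] [[|//] ?]; apply: val_inj.
  have Eq : forall x y : 'I_(2 ^ 0), (x == y) = true by move=> x y; rewrite (E x y) eqxx.
  rewrite !Eq /=.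
  have -> : (2 ^ 0)%:R = 1 :> C by [].
  by rewrite !mulr1.
rewrite (reindex (cast_ord (esym (expnS 4 n)))); last first.
  by exists (cast_ord (expnS 4 n)) => i _; rewrite ?cast_ordK ?cast_ordKV.
set u := fun x : 'I_(2 ^ n.+1) => mxtens_unindex (cast_ord (esym (esym (expnS 2 n))) x).
have PE : forall (k : 'I_(4 * 4 ^ n)) x y,
   @pauli C n.+1 (cast_ord (esym (expnS 4 n)) k) x y =
   sigma C (mxtens_unindex k).1 (u x).1 (u y).1 *
   @pauli C n (mxtens_unindex k).2 (u x).2 (u y).2.
  move=> k x y.
  have unf : forall j, @pauli C n.+1 j =
    castmx (esym (expnS 2 n), esym (expnS 2 n))
      (sigma C (mxtens_unindex (cast_ord (expnS 4 n) j)).1 *t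
       @pauli C n (mxtens_unindex (cast_ord (expnS 4 n) j)).2) := fun j => erefl.
  by rewrite unf castmxE mxE cast_ordKV.
under eq_bigr do rewrite !PE.
transitivity (\sum_(k < 4 * 4 ^ n)
   ((fun k1 => sigma C k1 (u a).1 (u b).1 * sigma C k1 (u c).1 (u e).1)
      (mxtens_unindex k).1 *
    (fun k2 => @pauli C n k2 (u a).2 (u b).2 * @pauli C n k2 (u c).2 (u e).2)
      (mxtens_unindex k).2)).
  by apply: eq_bigr => k _ /=; rewrite mulrACA.
rewrite -(mxtens.mulr_sum (fun k1 => sigma C k1 (u a).1 (u b).1 * sigma C k1 (u c).1 (u e).1)
  (fun k2 => @pauli C n k2 (u a).2 (u b).2 * @pauli C n k2 (u c).2 (u e).2)).
rewrite sigmaK IH.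
have uinj : injective u.
  by apply: (can_inj (g := fun p => cast_ord (esym (expnS 2 n)) (mxtens_index p)))
    => x; apply: val_inj; rewrite /u mxtens_unindexK.
rewrite -(inj_eq uinj a e) -(inj_eq uinj b c).
case: (u a) (u b) (u c) (u e) => [a1 a2] [b1 b2] [c1 c2] [e1 e2] /=.
rewrite !xpair_eqE /= expnS -!mulnb !natrM; ring.
Qed.

Section Gen.
Variables (d m : nat) (P : 'I_m -> 'M[C]_d) (N : C).
Hypothesis HK : forall a b c e, \sum_k P k a b * P k c e = N * ((a == e)%:R * (b == c)%:R).

Lemma sum_delta2 d' (F : 'I_d' -> C) j : \sum_i F i * (j == i)%:R = F j.
Proof. by rewrite -(sum_delta F j); apply: eq_bigr => i _; rewrite eq_sym. Qed.

Lemma compl1 (Z : 'M[C]_d) : \sum_k \tr (P k *m Z) *: P k = N *: Z.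
Proof.
apply/matrixP => c e; rewrite summxE mxE.
transitivity (\sum_a \sum_b Z b a * \sum_k P k a b * P k c e).
  under eq_bigr do rewrite mxE /mxtrace mulr_suml.
  under eq_bigr do under eq_bigr do rewrite mxE mulr_suml.
  rewrite exchange_big; apply: eq_bigr => a _.
  rewrite exchange_big; apply: eq_bigr => b _.
  by rewrite mulr_sumr; apply: eq_bigr => k _; ring.
rewrite (eq_bigr (fun a => N * Z c a * (a == e)%:R)) ?sum_delta //.
move=> a _; rewrite -(sum_delta (fun b => N * Z b a * (a == e)%:R) c).
by apply: eq_bigr => b _; rewrite HK; ring.
Qed.

Lemma compl2 (A : 'M[C]_d) i j :
  \sum_k (P k *m A) i j *: P k = N *: (A *m delta_mx j i).
Proof.
apply/matrixP => c e; rewrite summxE !mxE.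
transitivity (\sum_l A l j * \sum_k P k i l * P k c e).
  under eq_bigr do rewrite !mxE mulr_suml.
  rewrite exchange_big; apply: eq_bigr => l _.
  by rewrite mulr_sumr; apply: eq_bigr => k _; ring.
rewrite (eq_bigr (fun l => (N * A l j * (i == e)%:R) * (l == c)%:R)); last first.
  by move=> l _; rewrite HK; ring.
rewrite sum_delta mulr_sumr.
rewrite (eq_bigr (fun l => (N * A c l * (e == i)%:R) * (l == j)%:R)); last first.
  by move=> l _; rewrite mxE -mulnb natrM; ring.
by rewrite sum_delta [e == i]eq_sym; ring.
Qed.

Lemma compl3 (A : 'M[C]_d) i j :
  \sum_k (A *m P k) i j *: P k = N *: (delta_mx j i *m A).
Proof.
apply/matrixP => c e; rewrite summxE !mxE.
transitivity (\sum_l A i l * \sum_k P k l j * P k c e).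
  under eq_bigr do rewrite !mxE mulr_suml.
  rewrite exchange_big; apply: eq_bigr => l _.
  by rewrite mulr_sumr; apply: eq_bigr => k _; ring.
rewrite (eq_bigr (fun l => (N * A i l * (j == c)%:R) * (l == e)%:R)); last first.
  by move=> l _; rewrite HK; ring.
rewrite sum_delta mulr_sumr.
rewrite (eq_bigr (fun l => (N * A l e * (c == j)%:R) * (l == i)%:R)); last first.
  by move=> l _; rewrite mxE -mulnb natrM; ring.
by rewrite sum_delta [c == j]eq_sym; ring.
Qed.
End Gen.

Lemma projA d (P X : 'M[C]_d) :
  \sum_b sgnb C b * \tr (proj P b *m X *m proj P b) = \tr (P *m X).
Proof.
rewrite big_bool /= /proj /sgnb.
do 3 rewrite -?scalemxAl -?scalemxAr ?(mulmxDl, mulmxDr, mul1mx, mulmx1).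
rewrite !(scalerDr, mxtraceD, mxtraceZ, scalerA).
rewrite [\tr (X *m P)]mxtrace_mulC.
by field.
Qed.

Lemma projB d (P R : 'M[C]_d) :
  \sum_b sgnb C b *: (proj P b *m R *m proj P b) = 2^-1 *: (P *m R + R *m P).
Proof.
rewrite big_bool /= /proj /sgnb.
do 3 rewrite -?scalemxAl -?scalemxAr ?(mulmxDl, mulmxDr, mul1mx, mulmx1).
rewrite !(scalerDr, scalerA).
move: (P *m R *m P) (P *m R) (R *m P) => A B D.
apply/matrixP => i j; rewrite !mxE.
by field.
Qed.

Lemma tensmx_sumr m n p q k (A : 'M[C]_(m, n)) (F : 'I_k -> 'M[C]_(p, q)) :
  A *t (\sum_i F i) = \sum_i A *t F i.
Proof.
apply/matrixP => x y; rewrite mxE !summxE mulr_sumr.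
by apply: eq_bigr => i _; rewrite mxE.
Qed.

Lemma tensmx_suml m n p q k (B : 'M[C]_(p, q)) (F : 'I_k -> 'M[C]_(m, n)) :
  (\sum_i F i) *t B = \sum_i F i *t B.
Proof.
apply/matrixP => x y; rewrite mxE !summxE mulr_suml.
by apply: eq_bigr => i _; rewrite mxE.
Qed.

Lemma tensmxZr m n p q (A : 'M[C]_(m, n)) (B : 'M[C]_(p, q)) c :
  A *t (c *: B) = c *: (A *t B).
Proof. by apply/matrixP => x y; rewrite !mxE mulrCA. Qed.

Lemma tensmxZl m n p q (A : 'M[C]_(m, n)) (B : 'M[C]_(p, q)) c :
  (c *: A) *t B = c *: (A *t B).
Proof. by apply/matrixP => x y; rewrite !mxE mulrA. Qed.

Lemma tensmxDl m n p q (A A' : 'M[C]_(m, n)) (B : 'M[C]_(p, q)) :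
  (A + A') *t B = A *t B + A' *t B.
Proof. by apply/matrixP => x y; rewrite !mxE mulrDl. Qed.

Lemma corrE n (rho : 'M[C]_(2 ^ n)) (Phi : {linear 'M[C]_(2 ^ n) -> 'M[C]_(2 ^ n)}) i1 i2 :
  corr rho Phi i1 i2 =
  \tr (pauli C i2 *m Phi (2^-1 *: (pauli C i1 *m rho + rho *m pauli C i1))).
Proof.
rewrite /corr.
transitivity (\sum_a sgnb C a * \tr (pauli C i2 *m
      Phi (proj (pauli C i1) a *m rho *m proj (pauli C i1) a))).
  apply: eq_bigr => a _; rewrite -projA mulr_sumr; apply: eq_bigr => b _.
  by rewrite mulrA.
rewrite -projB linear_sum /= mulmx_sumr raddf_sum /=.
apply: eq_bigr => a _.
move: (proj _ a *m rho *m proj _ a) => Y.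
by rewrite linearZ /= -scalemxAr mxtraceZ.
Qed.
End H.
Theorem theorem1 (C : numClosedFieldType) (n : nat) (hn : (1 <= n)%N)
  (rho1 : 'M[C]_(2 ^ n)) (Phi : {linear 'M[C]_(2 ^ n) -> 'M[C]_(2 ^ n)})
  (hrho : density rho1) (hPhi : CPTP Phi) :
  pdm rho1 Phi =
  2^-1 *: (choi Phi *m (rho1 *t (1%:M : 'M[C]_(2 ^ n)))
           + (rho1 *t (1%:M : 'M[C]_(2 ^ n))) *m choi Phi).
Proof.
have HK := @pauliK C n.
set N : C := (2 ^ n)%:R.
pose Y i1 := 2^-1 *: (pauli C i1 *m rho1 + rho1 *m pauli C i1).
pose E (i j : 'I_(2 ^ n)) := Phi (delta_mx i j).
pose T := \sum_i \sum_j ((rho1 *m delta_mx j i + delta_mx j i *m rho1) *t E i j).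
have L1 : pdm rho1 Phi = ((2 ^ (2 * n))%:R)^-1 *: \sum_i1 pauli C i1 *t (N *: Phi (Y i1)).
  rewrite /pdm; congr (_ *: _); apply: eq_bigr => i1 _.
  rewrite -(@compl1 C _ _ _ _ HK) tensmx_sumr; apply: eq_bigr => i2 _.
  by rewrite corrE tensmxZr.
have L2 : forall i1, Phi (Y i1) = \sum_i \sum_j Y i1 i j *: E i j.
  move=> i1; rewrite {1}(matrix_sum_delta (Y i1)) linear_sum; apply: eq_bigr => i _.
  by rewrite linear_sum; apply: eq_bigr => j _; rewrite linearZ.
have L3 : forall i j, \sum_i1 Y i1 i j *: pauli C i1 =
    2^-1 *: (N *: (rho1 *m delta_mx j i) + N *: (delta_mx j i *m rho1)).
  move=> i j; rewrite -(@compl2 C _ _ _ _ HK) -(@compl3 C _ _ _ _ HK) -big_split.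
  rewrite scaler_sumr; apply: eq_bigr => i1 _.
  by rewrite /Y !mxE /= -scalerDl scalerA.
have LHS : pdm rho1 Phi = (((2 ^ (2 * n))%:R)^-1 * N * 2^-1 * N) *: T.
  rewrite L1.
  under eq_bigr do rewrite L2 tensmxZr tensmx_sumr; rewrite -scaler_sumr.
  under eq_bigr do under eq_bigr do rewrite tensmx_sumr.
  rewrite exchange_big.
  under eq_bigr do rewrite exchange_big.
  rewrite /T !scaler_sumr; apply: eq_bigr => i _.
  rewrite !scaler_sumr; apply: eq_bigr => j _.
  under eq_bigr do rewrite tensmxZr -tensmxZl.
  rewrite -tensmx_suml L3 !tensmxZl tensmxDl !tensmxZl scalerDr !scalerA.
  by rewrite tensmxDl !scalerDr !scalerA !mulrA.
have RHS : choi Phi *m (rho1 *t 1%:M) + (rho1 *t 1%:M) *m choi Phi = T.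
  rewrite /choi !mulmx_suml !mulmx_sumr -big_split /T; apply: eq_bigr => i _.
  rewrite !mulmx_suml !mulmx_sumr -big_split; apply: eq_bigr => j _.
  by rewrite !tensmx_mul mulmx1 mul1mx trmx_delta tensmxDl addrC.
rewrite LHS RHS; congr (_ *: _).
have N0 : N != 0 by rewrite /N pnatr_eq0 expn_eq0.
have -> : (2 ^ (2 * n))%:R = N * N :> C by rewrite /N -natrM -expnD addnn -mul2n.
by field.
Qed.
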